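(* Let $K$ be an oriented virtual knot diagram with a positive classical crossing $l$, and let $K'$ be the diagram obtained from $K$ by switching $l$ to a negative crossing. Then $\gamma(K)-\gamma(K')=\pm 2\,t^{\bar L(K_l)}$ and $\bar\gamma(K)-\bar\gamma(K')=0$.
   Context: For an oriented virtual knot diagram $K$ and a classical crossing $c$ with sign $sgn(c)\in\{\pm1\}$, let $K_c$ be the two-component oriented virtual link diagram obtained by smoothing $c$ in the orientation-respecting way. Let $L(K_c)$ be the sum of the signs of all classical crossings of $K_c$ at which the two strands belong to different components, and $\bar L(K_c)=L(K_c)\bmod 2\in\{0,1\}$. Define $\gamma(K)=\sum_{c} t^{\bar L(K_c)}\,sgn(c)$, summing over all classical crossings, an element of the free $\mathbb{Z}$-module on $\{1,t\}$, and $\bar\gamma(K)$ to be $\gamma(K)$ with coefficients reduced modulo $2$. *)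

(* Defs.v *)
(* Virtual knot diagrams are encoded by their Gauss diagrams. *)
From mathcomp Require Import all_boot all_order all_algebra.
Set Implicit Arguments. Unset Strict Implicit. Unset Printing Implicit Defensive.
Import GRing.Theory Num.Theory.
Local Open Scope ring_scope.

(* A Gauss diagram with n classical crossings labelled by 'I_n:
   - gd_word : the cyclic sequence of crossings met while traversing the
     knot (read linearly from a base point), each crossing met twice;
   - gd_over : for each position of gd_word, whether the strand passes
     over there;
   - gd_sign : the sign (+1 / -1) of each crossing. *)
Record gauss (n : nat) := Gauss {
  gd_word : seq 'I_n;
  gd_over : seq bool;
  gd_sign : 'I_n -> int }.

Definition gauss_wf n (K : gauss n) : bool :=
  [&& size (gd_over K) == size (gd_word K),
      all (fun c => count_mem c (gd_word K) == 2%N) (enum 'I_n),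
      all (fun c => count (fun x => (x.1 == c) && x.2)
                       (zip (gd_word K) (gd_over K)) == 1%N) (enum 'I_n)
    & all (fun c => (gd_sign K c == 1) || (gd_sign K c == -1)) (enum 'I_n)].

Definition pos1 n (K : gauss n) (c : 'I_n) : nat := index c (gd_word K).
Definition pos2 n (K : gauss n) (c : 'I_n) : nat :=
  (pos1 K c + 1 + index c (drop (pos1 K c).+1 (gd_word K)))%N.

(* the arc strictly between the two occurrences of c: after smoothing c
   (orientation-respecting), this arc is one component of K_c and the rest
   of the word is the other. *)
Definition arc n (K : gauss n) (c : 'I_n) : seq 'I_n :=
  take (pos2 K c - pos1 K c - 1) (drop (pos1 K c).+1 (gd_word K)).

(* crossing d of K_c has its two strands on different components *)
Definition intercomp n (K : gauss n) (c d : 'I_n) : bool :=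
  (d != c) && odd (count_mem d (arc K c)).

Definition Lsm n (K : gauss n) (c : 'I_n) : int :=
  \sum_(d < n | intercomp K c d) gd_sign K d.

Definition Lbar n (K : gauss n) (c : 'I_n) : nat := odd `|Lsm K c|%N.

Definition gamma n (K : gauss n) : {poly int} :=
  \sum_(c < n) (gd_sign K c)%:P * 'X^(Lbar K c).

Definition gammabar n (K : gauss n) : {poly 'F_2} :=
  map_poly (fun z : int => z%:~R : 'F_2) (gamma K).

Definition switch n (K : gauss n) (l : 'I_n) : gauss n :=
  Gauss (gd_word K)
        [seq if x.1 == l then ~~ x.2 else x.2 | x <- zip (gd_word K) (gd_over K)]
        (fun c => if c == l then - gd_sign K c else gd_sign K c).

(* Main.v *)
Require Import Defs.
From mathcomp Require Import all_boot all_order all_algebra.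
Import GRing.Theory Num.Theory.
Local Open Scope ring_scope.

Lemma oddabs (x y : int) : (2 %| y)%Z -> odd `|x - y|%N = odd `|x|%N.
Proof.
move=> h; apply: negb_inj; rewrite -!dvdn2.
have := rpredBr x h; rewrite /in_mem /= /dvdz /=. move=> e; exact e.
Qed.

Lemma ic_sw n (K : gauss n) l c d : intercomp (switch K l) c d = intercomp K c d.
Proof. by []. Qed.

Lemma sign_sw n (K : gauss n) l d : gd_sign (switch K l) d =
  if d == l then - gd_sign K d else gd_sign K d.
Proof. by []. Qed.

Lemma Lsm_sw n (K : gauss n) l c : gd_sign K l = 1 ->
  Lsm (switch K l) c = Lsm K c - (if intercomp K c l then 2 else 0).
Proof.
move=> hl; rewrite /Lsm; under eq_bigl do rewrite ic_sw.
case: (boolP (intercomp K c l)) => hic.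
  rewrite (bigD1 l) // [in RHS](bigD1 l) // sign_sw eqxx hl.
  rewrite (@eq_bigr _ _ _ _ _ _ _ (fun d => gd_sign K d)); last first.
    by move=> d /andP[_ /negbTE hd]; rewrite sign_sw hd.
  by rewrite addrAC; congr (_ + _).
rewrite subr0; apply: eq_bigr => d hd; rewrite sign_sw.
case: eqP => // e; by rewrite -e hd in hic.
Qed.

Lemma Lbar_sw n (K : gauss n) l c : gd_sign K l = 1 ->
  Lbar (switch K l) c = Lbar K c.
Proof.
move=> hl; rewrite /Lbar Lsm_sw // oddabs //.
case: ifP => _; [exact: dvdzz | exact: dvdz0].
Qed.

Lemma gamma_diff n (K : gauss n) l : gd_sign K l = 1 ->
  gamma K - gamma (switch K l) = (1 * 2)%:P * 'X^(Lbar K l).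
Proof.
move=> hl; rewrite /gamma -sumrB (bigD1 l) // big1 ?addr0.
  by rewrite Lbar_sw // sign_sw eqxx hl -mulrBl -polyCB /= addr0 opprK mul1r.
move=> d /negbTE hd; rewrite Lbar_sw // sign_sw hd.
by rewrite subrr.
Qed.

Theorem mainTheorem4 (n : nat) (K : gauss n) (l : 'I_n) :
  gauss_wf K -> gd_sign K l = 1 ->
  (exists e : int, (e = 1 \/ e = -1) /\
     gamma K - gamma (switch K l) = (e * 2)%:P * 'X^(Lbar K l))
  /\ gammabar K - gammabar (switch K l) = 0.
Proof.
move=> _ hl; split; first by exists 1; split; [left | exact: gamma_diff].
apply/polyP => i; rewrite coefB coef0 /gammabar !coef_map_id0 ?mulr0z //.
rewrite -mulrzBr -coefB gamma_diff // coefCM coefXn mul1r.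
by case: (i == _) => /=; rewrite ?mulr0 ?mulr1 //; apply/eqP.
Qed.
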